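(* Let $(a,b,c)^T\in\mathbb{Z}^3$ with $\gcd(a,b,c)=1$, and let $K=\{(x,y,z)^T\in\mathbb{R}^3 : ax+by+cz=0\}$. Then there exists an orthogonal lattice basis of $K$, i.e. two mutually orthogonal vectors $u,v\in\mathbb{Z}^3\cap K$ forming a basis of $K$.
   Context: A lattice basis of $K$ means a basis of the real vector space $K$ consisting of vectors of $\mathbb{Z}^3$; orthogonality is with respect to the standard inner product on $\mathbb{R}^3$. *)

(* Defs.v *)
From Stdlib Require Import ZArith Reals.

Definition embed (u : Z * Z * Z) : R * R * R :=
  let '(u1, u2, u3) := u in (IZR u1, IZR u2, IZR u3).

Definition inK (a b c : Z) (p : R * R * R) : Prop :=
  let '(x, y, z) := p in (IZR a * x + IZR b * y + IZR c * z = 0)%R.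

Definition dotR (p q : R * R * R) : R :=
  let '(x1, y1, z1) := p in let '(x2, y2, z2) := q in
  (x1 * x2 + y1 * y2 + z1 * z2)%R.

Definition lincomb (s t : R) (p q : R * R * R) : R * R * R :=
  let '(x1, y1, z1) := p in let '(x2, y2, z2) := q in
  (s * x1 + t * x2, s * y1 + t * y2, s * z1 + t * z2)%R.

Definition is_basis_of_K (a b c : Z) (p q : R * R * R) : Prop :=
  inK a b c p /\ inK a b c q /\
  (forall s t : R, lincomb s t p q = (0, 0, 0)%R -> s = 0%R /\ t = 0%R) /\
  (forall r : R * R * R, inK a b c r -> exists s t : R, r = lincomb s t p q).

(* Main.v *)
Require Import Defs.
From Stdlib Require Import ZArith Reals Lra Lia Psatz.
Open Scope R_scope.

Lemma span_id (A B C U1 U2 U3 x y z : R) :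
  A*U1+B*U2+C*U3 = 0 -> A*x+B*y+C*z = 0 ->
  let N := A*A+B*B+C*C in let U := U1*U1+U2*U2+U3*U3 in
  let V1 := B*U3-C*U2 in let V2 := C*U1-A*U3 in let V3 := A*U2-B*U1 in
  let ru := x*U1+y*U2+z*U3 in let rv := x*V1+y*V2+z*V3 in
  N*U*x = N*ru*U1 + rv*V1 /\ N*U*y = N*ru*U2 + rv*V2 /\ N*U*z = N*ru*U3 + rv*V3.
Proof.
  intros Hu Hr N U V1 V2 V3 ru rv.
  set (nu := A*U1+B*U2+C*U3) in *. set (nr := A*x+B*y+C*z) in *.
  split; [|split].
  - transitivity (nu*nu*x + rv*V1 + ru*N*U1 - ru*nu*A - nr*nu*U1 + nr*U*A).
    + unfold nu, nr, N, U, rv, ru, V1, V2, V3; ring.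
    + rewrite Hu, Hr; ring.
  - transitivity (nu*nu*y + rv*V2 + ru*N*U2 - ru*nu*B - nr*nu*U2 + nr*U*B).
    + unfold nu, nr, N, U, rv, ru, V1, V2, V3; ring.
    + rewrite Hu, Hr; ring.
  - transitivity (nu*nu*z + rv*V3 + ru*N*U3 - ru*nu*C - nr*nu*U3 + nr*U*C).
    + unfold nu, nr, N, U, rv, ru, V1, V2, V3; ring.
    + rewrite Hu, Hr; ring.
Qed.

Lemma sq_pos3 (A B C : R) : (A<>0 \/ B<>0 \/ C<>0) -> 0 < A*A+B*B+C*C.
Proof.
  intros [H|[H|H]].
  - assert (0 < A*A) by (apply Rsqr_pos_lt; exact H). nra.
  - assert (0 < B*B) by (apply Rsqr_pos_lt; exact H). nra.
  - assert (0 < C*C) by (apply Rsqr_pos_lt; exact H). nra.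
Qed.

Lemma gen (a b c u1 u2 u3 : Z) :
  (a<>0 \/ b<>0 \/ c<>0)%Z -> (u1<>0 \/ u2<>0 \/ u3<>0)%Z ->
  (a*u1+b*u2+c*u3 = 0)%Z ->
  exists u v : Z * Z * Z,
    is_basis_of_K a b c (embed u) (embed v) /\
    dotR (embed u) (embed v) = 0%R.
Proof.
  intros Hn Hu0 Hu.
  exists (u1,u2,u3), (b*u3-c*u2, c*u1-a*u3, a*u2-b*u1)%Z.
  unfold is_basis_of_K, inK, embed, lincomb, dotR.
  rewrite !minus_IZR, !mult_IZR.
  apply (f_equal IZR) in Hu. rewrite !plus_IZR, !mult_IZR in Hu.
  assert (HN : 0 < IZR a * IZR a + IZR b * IZR b + IZR c * IZR c).
  { apply sq_pos3. destruct Hn as [H|[H|H]]; [left|right;left|right;right]; apply not_0_IZR; exact H. }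
  assert (HU : 0 < IZR u1 * IZR u1 + IZR u2 * IZR u2 + IZR u3 * IZR u3).
  { apply sq_pos3. destruct Hu0 as [H|[H|H]]; [left|right;left|right;right]; apply not_0_IZR; exact H. }
  set (A := IZR a) in *. set (B := IZR b) in *. set (C := IZR c) in *.
  set (U1 := IZR u1) in *. set (U2 := IZR u2) in *. set (U3 := IZR u3) in *.
  simpl in Hu.
  set (N := A*A+B*B+C*C) in *. set (U := U1*U1+U2*U2+U3*U3) in *.
  set (V1 := B*U3-C*U2). set (V2 := C*U1-A*U3). set (V3 := A*U2-B*U1).
  assert (HV : V1*V1+V2*V2+V3*V3 = N*U).
  { transitivity (N*U - (A*U1+B*U2+C*U3)*(A*U1+B*U2+C*U3)).
    - unfold V1,V2,V3,N,U; ring.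
    - rewrite Hu; ring. }
  assert (HNU : 0 < N*U) by (apply Rmult_lt_0_compat; assumption).
  split; [split; [|split; [|split]]|].
  - exact Hu.
  - unfold V1,V2,V3; ring.
  - intros s t E. injection E as e1 e2 e3.
    assert (E1 : s * U = 0).
    { transitivity ((s*U1+t*V1)*U1 + (s*U2+t*V2)*U2 + (s*U3+t*V3)*U3).
      - unfold U,V1,V2,V3; ring.
      - rewrite e1, e2, e3; ring. }
    assert (E2 : t * (N*U) = 0).
    { rewrite <- HV.
      transitivity ((s*U1+t*V1)*V1 + (s*U2+t*V2)*V2 + (s*U3+t*V3)*V3).
      - unfold U,V1,V2,V3; ring.
      - rewrite e1, e2, e3; ring. }
    split.
    + destruct (Rmult_integral _ _ E1) as [H|H]; [exact H | lra].
    + destruct (Rmult_integral _ _ E2) as [H|H]; [exact H | lra].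
  - intros [[x y] z] Hr.
    destruct (span_id A B C U1 U2 U3 x y z Hu Hr) as [h1 [h2 h3]].
    fold N U V1 V2 V3 in h1, h2, h3.
    exists ((x*U1+y*U2+z*U3)/U), ((x*V1+y*V2+z*V3)/(N*U)).
    assert (NU0 : N*U <> 0) by lra. assert (U0 : U <> 0) by lra.
    assert (N0 : N <> 0) by lra.
    f_equal; [f_equal|].
    + apply (Rmult_eq_reg_l (N*U)); [|exact NU0]. rewrite h1. field. split; assumption.
    + apply (Rmult_eq_reg_l (N*U)); [|exact NU0]. rewrite h2. field. split; assumption.
    + apply (Rmult_eq_reg_l (N*U)); [|exact NU0]. rewrite h3. field. split; assumption.
  - unfold V1,V2,V3; ring.
Qed.

Theorem lemma2 (a b c : Z) (Hgcd : Z.gcd (Z.gcd a b) c = 1%Z) :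
  exists u v : Z * Z * Z,
    is_basis_of_K a b c (embed u) (embed v) /\
    dotR (embed u) (embed v) = 0%R.
Proof.
  assert (Hn : (a<>0 \/ b<>0 \/ c<>0)%Z).
  { destruct (Z.eq_dec a 0); destruct (Z.eq_dec b 0); destruct (Z.eq_dec c 0); subst; try tauto.
    simpl in Hgcd. discriminate. }
  destruct (Z.eq_dec a 0) as [Ha|Ha]; [destruct (Z.eq_dec b 0) as [Hb|Hb]|].
  - subst. apply (gen 0 0 c 1 0 0); [exact Hn|left; lia|lia].
  - apply (gen a b c (-b) a 0); [exact Hn|left; lia|lia].
  - apply (gen a b c (-b) a 0); [exact Hn|right; left; exact Ha|lia].
Qed.
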